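(* Let $X$ be any marked Dynkin diagram (not necessarily extensible) with $d$ nodes, and let $n\ge d$ be such that $\det(X_n)\ne0$. Then in $P(X_n)$, $$\overline{\omega}_i^{(n)}\equiv i\,\overline{\omega}_1^{(n)}\pmod{Q(X_n)}\quad\text{for }1\le i\le n-d+1.$$
   Context: A marked Dynkin diagram $X$ has nodes $1,\dots,d$ with node $d$ distinguished and symmetrizable generalized Cartan matrix $C(X)$. For $n\ge d$, $X_n$ is obtained by attaching a simply-laced chain of new nodes $d+1,\dots,n$ to node $d$ (so $C(X_n)$ has $C(X)$ as upper-left block, $2$ on the remaining diagonal, $-1$ in positions $(i,i+1),(i+1,i)$ for $d\le i<n$, $0$ elsewhere). $\det(X_n)$ is the determinant of $C(X_n)$. For the Kac–Moody algebra $\mathfrak g(X_n)$: simple roots $\alpha_i^{(n)}$, root lattice $Q(X_n)=\bigoplus\mathbb Z\alpha_i^{(n)}$, weight lattice $P(X_n)$, fundamental weights $\omega_i^{(n)}$, and $\overline{\omega}_i^{(n)}=\omega_{n-i+1}^{(n)}$. *)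

(* Defs.v *)
From HB Require Import structures.
From mathcomp Require Import all_boot all_order all_algebra.
Set Implicit Arguments. Unset Strict Implicit. Unset Printing Implicit Defensive.
Import Order.TTheory GRing.Theory Num.Theory.
Local Open Scope ring_scope.

Definition is_GCM (d : nat) (A : 'M[int]_d) : Prop :=
  (forall i, A i i = 2) /\
  (forall i j, i != j -> A i j <= 0) /\
  (forall i j, (A i j == 0) = (A j i == 0)).

Definition symmetrizable (d : nat) (A : 'M[int]_d) : Prop :=
  exists D : 'I_d -> rat, (forall i, 0 < D i) /\
    (forall i j, D i * (A i j)%:~R = D j * (A j i)%:~R).

(* A marked Dynkin diagram X with d >= 1 nodes (node d, i.e. index d-1,
   is the distinguished one), given by its Cartan matrix C(X). *)
Definition marked_dynkin (d : nat) (A : 'M[int]_d) : Prop :=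
  (0 < d)%N /\ is_GCM A /\ symmetrizable A.

(* C(X_n): C(X) as upper-left block, 2 on the rest of the diagonal,
   -1 at (i,i+1),(i+1,i) for d <= i < n (1-indexed), 0 elsewhere. *)
Definition ext_mx (d : nat) (A : 'M[int]_d) (n : nat) : 'M[int]_n :=
  \matrix_(i < n, j < n)
    if ((i < d)%N && (j < d)%N) then
      (if insub (nat_of_ord i) is Some i' then
        (if insub (nat_of_ord j) is Some j' then A i' j' else 0) else 0)
    else if nat_of_ord i == j then 2
    else if ((d.-1 <= minn i j)%N && ((nat_of_ord i == j.+1) || (nat_of_ord j == i.+1))) then -1
    else 0.

(* Weights are written in coordinates w.r.t. the fundamental weights
   omega_1, ..., omega_n (valid since det C(X_n) <> 0, so P(X_n) is the
   free Z-module on the fundamental weights).  omega k is the (1-indexed)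
   k-th fundamental weight. *)
Definition omega (n k : nat) : 'rV[int]_n := \row_(j < n) ((j.+1 == k)%:R).

Definition omegabar (n i : nat) : 'rV[int]_n := omega n (n - i + 1).

(* Simple root alpha_j (0-indexed) in omega-coordinates: <alpha_j, alpha_i^v> = a_ij. *)
Definition alpha (n : nat) (C : 'M[int]_n) (j : 'I_n) : 'rV[int]_n :=
  \row_(i < n) C i j.

Definition in_root_lattice (n : nat) (C : 'M[int]_n) (v : 'rV[int]_n) : Prop :=
  exists c : 'I_n -> int, v = \sum_(j < n) c j *: alpha C j.

Definition congr_modQ (n : nat) (C : 'M[int]_n) (u v : 'rV[int]_n) : Prop :=
  in_root_lattice C (u - v).

(* Main.v *)
Require Import Defs.
From HB Require Import structures.
From mathcomp Require Import all_boot all_order all_algebra.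
From mathcomp Require Import ring zify.
Import Order.TTheory GRing.Theory Num.Theory.
Local Open Scope ring_scope.

Section L.
Variables (n : nat) (C : 'M[int]_n).
Lemma inQ0 : in_root_lattice C 0.
Proof. exists (fun _ => 0); by rewrite big1 // => j _; rewrite scale0r. Qed.
Lemma inQD u v : in_root_lattice C u -> in_root_lattice C v -> in_root_lattice C (u + v).
Proof. move=> [a ->] [b ->]; exists (fun j => a j + b j); rewrite -big_split /=.
by apply: eq_bigr => j _; rewrite scalerDl. Qed.
Lemma inQZ (c : int) u : in_root_lattice C u -> in_root_lattice C (c *: u).
Proof. move=> [a ->]; exists (fun j => c * a j); rewrite scaler_sumr.
by apply: eq_bigr => j _; rewrite scalerA. Qed.
Lemma inQN u : in_root_lattice C u -> in_root_lattice C (- u).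
Proof. by move=> h; rewrite -scaleN1r; apply: inQZ. Qed.
Lemma inQa j : in_root_lattice C (alpha C j).
Proof. exists (fun k => (k == j)%:R); rewrite (bigD1 j) //= big1 ?addr0 ?eqxx ?scale1r //.
by move=> k /negbTE ->; rewrite scale0r. Qed.
End L.

Lemma alpha_eq d (X : 'M[int]_d) n (m : 'I_n) : (0 < d)%N -> (d <= m)%N ->
  alpha (ext_mx X n) m = 2%:Z *: omega n m.+1 - omega n m - omega n m.+2.
Proof.
move=> d0 hm; apply/rowP => r; rewrite !mxE.
rewrite (ltnNge m d) hm andbF.
rewrite !eqSS.
move: hm; case: r => r /= _; case: m => m /= _ => hm.
case E1: (r == m); case E2: (r == m.+1); case E3: (m == r.+1); case E4: (r.+1 == m);
  case E5: (d.-1 <= minn r m)%N => //=; lia.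
Qed.

Lemma comb {n} (a b c w : 'rV[int]_n) (k : nat) :
  c - (k.+2)%:Z *: w = 2%:Z *: (b - (k.+1)%:Z *: w) - (a - k%:Z *: w) - (2%:Z *: b - c - a).
Proof.
apply/rowP => j; rewrite !mxE.
have e1 : (k.+2)%:Z = k%:Z + 2 by rewrite -addn2.
have e2 : (k.+1)%:Z = k%:Z + 1 by rewrite -addn1.
rewrite e1 e2; ring.
Qed.

Theorem lemma3p8 (d : nat) (X : 'M[int]_d) (hX : marked_dynkin X)
  (n : nat) (hdn : (d <= n)%N) (hdet : \det (ext_mx X n) != 0)
  (i : nat) (hi1 : (1 <= i)%N) (hi2 : (i <= n - d + 1)%N) :
  congr_modQ (ext_mx X n) (omegabar n i) (i%:Z *: omegabar n 1).
Proof.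
case: hX => d0 _.
set C := ext_mx X n.
have n0 : (0 < n)%N by apply: leq_trans hdn.
have e1 : (n - 1 + 1 = n)%N by lia.
rewrite /congr_modQ /omegabar e1.
pose P k := in_root_lattice C (omega n (n - k + 1) - k%:Z *: omega n n).
suff H : forall k, (k < n - d + 1)%N -> P k /\ P k.+1.
  have [_ ] := H i.-1 ltac:(lia).
  by rewrite prednK.
elim=> [_|k IH hk].
  split; rewrite /P.
    rewrite scale0r subr0 (_ : omega n (n - 0 + 1) = 0); first exact: inQ0.
    apply/rowP => j; rewrite !mxE.
    by rewrite (_ : (j.+1 == n - 0 + 1)%N = false) //; apply/eqP; have := ltn_ord j; lia.
  by rewrite e1 scale1r subrr; exact: inQ0.
have [Pk Pk1] := IH ltac:(lia).
split=> //.
have hm : (n - k.+1 < n)%N by lia.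
pose m := Ordinal hm.
have := @alpha_eq d X n m d0 ltac:(rewrite /=; lia).
rewrite /= => ea.
rewrite /P.
have -> : (n - k.+2 + 1 = n - k.+1)%N by lia.
have e3 : (n - k + 1 = (n - k.+1).+2)%N by lia.
have e4 : (n - k.+1 + 1 = (n - k.+1).+1)%N by lia.
rewrite (comb (omega n (n - k + 1)) (omega n (n - k.+1 + 1)) (omega n (n - k.+1))).
rewrite e3 e4 -ea.
apply: inQD; last by apply: inQN; apply: inQa.
apply: inQD; last by apply: inQN; rewrite -e3.
by apply: inQZ; rewrite -e4.
Qed.
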